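(* Let $q\ge 1$ and $n\ge 0$. The map $\phi$ defined below restricts to a bijection from $\mathcal{B}_n(1^{q+1})$ onto $\mathcal{W}^q_n$. Here, for $w\in\mathcal{B}_n(1^{q+1})$, $\phi(w)$ is defined recursively by $$\phi(w)=\begin{cases}1^k & \text{if } w=1^k,\ k\in[0,q],\\ \psi(\phi(v)) & \text{if } w=1^q0v,\\ \phi(v)\,01^k & \text{if } w=1^k0v,\ k\in[0,q-1],\end{cases}$$ and $\psi$ is the map from $\mathcal{B}_m$ to $\mathcal{B}_{m+q+1}$ given by $\psi(v01^k)=v001^{k+q}$ for any binary word $v$ and $k\ge 0$, and $\psi(1^m)=1^{m+q+1}$.
   Context: $\mathcal{B}_n$ is the set of binary words (over $\{0,1\}$) of length $n$; $\mathcal{B}_n(1^{q+1})$ is the set of words in $\mathcal{B}_n$ having no factor (block of consecutive letters) equal to $1^{q+1}$. For $q\ge1$, a binary word is $q$-decreasing if for every maximal run of $0$s, of length $a>0$, together with the (possibly empty) maximal run of $1$s immediately following it, of length $b\ge 0$, one has $q\cdot a>b$. $\mathcal{W}^q_n$ denotes the set of $q$-decreasing words of length $n$. Exponents denote repetition, e.g. $1^k$ is $k$ consecutive $1$s. *)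

(* Defs.v *)
(* Binary words are seq bool, with true = 1 and false = 0. *)
From mathcomp Require Import all_boot.
Set Implicit Arguments. Unset Strict Implicit. Unset Printing Implicit Defensive.

Definition avoids_ones (q : nat) (w : seq bool) : bool :=
  ~~ infix (nseq q.+1 true) w.

(* q-decreasing: for every maximal run of 0s of length a > 0 together with the
   (possibly empty) maximal run of 1s of length b immediately following it,
   q * a > b.  A decomposition w = u ++ 0^a ++ 1^b ++ x describes such a pair of
   maximal runs iff u is empty or ends with 1, and x is empty or (b > 0 and x
   starts with 0). *)
Definition q_decreasing (q : nat) (w : seq bool) : Prop :=
  forall (u x : seq bool) (a b : nat),
    w = u ++ nseq a false ++ nseq b true ++ x ->
    0 < a ->
    (u = [::] \/ last false u = true) ->
    (x = [::] \/ (0 < b /\ head true x = false)) ->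
    b < q * a.

(* psi : B_m -> B_(m+q+1), psi(v 0 1^k) = v 0 0 1^(k+q), psi(1^m) = 1^(m+q+1). *)
Definition psi (q : nat) (u : seq bool) : seq bool :=
  let k := find negb (rev u) in
  if k == size u then nseq (size u + q + 1) true
  else take (size u - k - 1) u ++ [:: false; false] ++ nseq (k + q) true.

(* phi, by recursion on the length (fuel = size w suffices since the recursive
   call is on a strictly shorter word).  Writing w = 1^k 0 v with k the number of
   leading 1s:  phi(1^k) = 1^k,  phi(1^q 0 v) = psi(phi v),
   phi(1^k 0 v) = phi(v) 0 1^k for k < q.  (Values on words containing 1^(q+1)
   are irrelevant.) *)
Fixpoint phi_fuel (q fuel : nat) (w : seq bool) : seq bool :=
  match fuel with
  | 0 => w
  | f.+1 =>
    let k := find negb w in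
    if k == size w then w
    else let v := drop k.+1 w in
         if k == q then psi q (phi_fuel q f v)
         else phi_fuel q f v ++ false :: nseq k true
  end.

Definition phi (q : nat) (w : seq bool) : seq bool := phi_fuel q (size w) w.

(* Main.v *)
Require Import Defs.
From mathcomp Require Import all_boot zify.
Set Implicit Arguments. Unset Strict Implicit.

Lemma nseqS_cat (T : Type) n (x : T) s : nseq n.+1 x ++ s = nseq n x ++ x :: s.
Proof. by elim: n => //= n ->. Qed.

Lemma head_rev (T : Type) (x : T) s : head x (rev s) = last x s.
Proof. by case/lastP: s => // s y; rewrite rev_rcons last_rcons. Qed.

Lemma last_nseq_true n : last true (nseq n true) = true.
Proof. by elim: n. Qed.

Lemma last_cat_ones y s n : last y (s ++ nseq n.+1 true) = true.
Proof. by rewrite last_cat /= last_nseq_true. Qed.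

Lemma find_ones k v : find negb (nseq k true ++ false :: v) = k.
Proof. by elim: k => //= k ->. Qed.

Lemma drop_ones k v : drop k.+1 (nseq k true ++ false :: v) = v.
Proof. elim: k => [|k IH] /=; [exact: drop0 | exact: IH]. Qed.

Lemma find_nseq k : find negb (nseq k true) = k.
Proof. by elim: k => //= k ->. Qed.

Lemma phi_fuelE q f1 f2 w : size w <= f1 -> size w <= f2 ->
  phi_fuel q f1 w = phi_fuel q f2 w.
Proof.
elim: f1 f2 w => [|f1 IH] [|f2] w /=.
- by [].
- by case: w.
- by case: w.
move=> h1 h2; case: ifP => // _.
by rewrite (IH f2) // size_drop; lia.
Qed.

Lemma phi_nseq q k : phi q (nseq k true) = nseq k true.
Proof. by rewrite /phi size_nseq; case: k => //= k; rewrite find_nseq size_nseq eqxx. Qed.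

Lemma phi_cons q k v : phi q (nseq k true ++ false :: v) =
  if k == q then psi q (phi q v) else phi q v ++ false :: nseq k true.
Proof.
rewrite /phi size_cat /= size_nseq addnS /= find_ones drop_ones.
rewrite ifN; last by apply/eqP; rewrite size_cat /= size_nseq; lia.
by rewrite (@phi_fuelE q (k + size v) (size v)) //; lia.
Qed.

Lemma psi_ones q m : psi q (nseq m true) = nseq (m + q + 1) true.
Proof. by rewrite /psi rev_nseq find_nseq size_nseq eqxx. Qed.

Lemma psi_block q p a b : 0 < a ->
  psi q (p ++ nseq a false ++ nseq b true) = p ++ nseq a.+1 false ++ nseq (b + q) true.
Proof.
case: a => // a _.
have E : p ++ nseq a.+1 false ++ nseq b true = (p ++ nseq a false) ++ false :: nseq b true.
  by rewrite nseqS_cat catA.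
rewrite E /psi rev_cat rev_cons rev_nseq -cats1 -catA /= find_ones.
rewrite !size_cat /= !size_nseq ifN; last by apply/eqP; lia.
have -> : size p + a + b.+1 - b - 1 = size (p ++ nseq a false).
  by rewrite size_cat size_nseq; lia.
rewrite take_size_cat // -catA /=.
clear E; congr (p ++ _); by elim: a => //= a ->.
Qed.

Definition qd q (w : seq bool) := forall u x a b,
  w = u ++ nseq a false ++ nseq b true ++ x -> 0 < a -> last true u = true -> b < q * a.

Lemma split_head (x : seq bool) : exists t x',
  x = nseq t true ++ x' /\ (x' = [::] \/ head true x' = false).
Proof.
elim: x => [|c x [t [x' [-> H]]]]; first by exists 0, [::]; split => //; left.
case: c; first by exists t.+1, x'.
by exists 0, (false :: nseq t true ++ x'); split => //; right.
Qed.

Lemma qd_equiv q w : 0 < q -> q_decreasing q w <-> qd q w.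
Proof.
move=> q0; split.
- move=> H u x a b E a0 lu.
  have [t [x' [Ex Hx]]] := split_head x; subst x.
  case: (posnP (b + t)) => [bt0|btp].
    have -> : b = 0 by lia.
    by rewrite muln_gt0 q0.
  have hu : u = [::] \/ last false u = true.
    by case: u lu {E} => [|c u] /= lu; [left|right].
  have E' : w = u ++ nseq a false ++ nseq (b + t) true ++ x'.
    by rewrite E nseqD -catA.
  have := H u x' a (b + t) E' a0 hu.
  have : x' = [::] \/ (0 < b + t /\ head true x' = false).
    by case: Hx => [->|->]; [left|right].
  move=> hx /(_ hx); lia.
- move=> H u x a b E a0 hu _; apply: H E a0 _.
  by case: hu => [->|] //; case: u.
Qed.

Lemma qd_prefix q w y : qd q (w ++ y) -> qd q w.
Proof. by move=> H u x a b E; apply: (H u (x ++ y)); rewrite E -!catA. Qed.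

Lemma qd_ones q m : qd q (nseq m true).
Proof.
move=> u x a b E a0 _.
have : false \in nseq m true by rewrite E !mem_cat mem_nseq a0 eqxx orbT.
by rewrite mem_nseq andbF.
Qed.

Lemma qd_last q p0 a b : qd q (p0 ++ nseq a false ++ nseq b true) -> 0 < a ->
  last true p0 = true -> b < q * a.
Proof. by move=> H; apply: (H p0 [::]); rewrite cats0. Qed.

Lemma qd_rcons_false q p : 0 < q -> qd q p -> qd q (rcons p false).
Proof.
move=> q0 H u x a b E a0 lu.
case/lastP: x E => [|x c] E.
- case: b E => [|b] E; first by rewrite muln_gt0 q0.
  have := congr1 (last true) E.
  by rewrite last_rcons cats0 catA last_cat_ones.
- rewrite -!rcons_cat in E; case/rcons_inj: E => Ep _.
  exact: (H u x a b Ep).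
Qed.

Lemma nseq_cat_inj (c : bool) n n' s s' : head (~~ c) s != c -> head (~~ c) s' != c ->
  nseq n c ++ s = nseq n' c ++ s' -> n = n' /\ s = s'.
Proof.
elim: n n' => [|n IH] [|n'] //=.
- by move=> h _ E; rewrite E /= eqxx in h.
- by move=> _ h E; rewrite -E /= eqxx in h.
- by move=> h h' [] /(IH n' h h') [-> ->].
Qed.

Lemma block_uniq u a b u' a' b' : 0 < a -> 0 < a' -> last true u = true ->
  last true u' = true ->
  u ++ nseq a false ++ nseq b true = u' ++ nseq a' false ++ nseq b' true ->
  [/\ u = u', a = a' & b = b'].
Proof.
move=> a0 a0' l l' /(congr1 rev); rewrite !rev_cat !rev_nseq -!catA => E.
have h1 : head (~~ true) (nseq a false ++ rev u) != true by case: a a0 {E}.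
have h2 : head (~~ true) (nseq a' false ++ rev u') != true by case: a' a0' {E}.
have [eb E2] := nseq_cat_inj h1 h2 E.
have h3 : head (~~ false) (rev u) != false by rewrite /= head_rev l.
have h4 : head (~~ false) (rev u') != false by rewrite /= head_rev l'.
have [ea E3] := nseq_cat_inj h3 h4 E2.
by split => //; rewrite -(revK u) E3 revK.
Qed.

Lemma qd_rcons_true q p0 a b : 0 < a -> last true p0 = true ->
  qd q (p0 ++ nseq a false ++ nseq b true) -> b.+1 < q * a ->
  qd q (rcons (p0 ++ nseq a false ++ nseq b true) true).
Proof.
move=> a0 l H hb u x a' b' E a0' lu.
case/lastP: x E => [|x c] E.
- case: b' E => [|b'] E.
    by nia.
  have E' : rcons (p0 ++ nseq a false ++ nseq b true) true =
            rcons (u ++ nseq a' false ++ nseq b' true) true.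
    by rewrite E cats0 -!cats1 -!catA -nseqS_cat cats0.
  have [_ <- <-] := block_uniq a0 a0' l lu (rcons_injl _ E'); done.
- rewrite -!rcons_cat in E; case/rcons_inj: E => Ep _.
  exact: (H u x a' b' Ep).
Qed.

Lemma qd_block q p0 a b : 0 < q -> 0 < a -> last true p0 = true -> qd q p0 ->
  b < q * a -> qd q (p0 ++ nseq a false ++ nseq b true).
Proof.
move=> q0 a0 l H; elim: b => [|b IH] hb.
- rewrite cats0; clear a0 hb; elim: a => [|a IHa]; first by rewrite cats0.
  have -> : p0 ++ nseq a.+1 false = rcons (p0 ++ nseq a false) false.
    by rewrite -cats1 -catA -nseqS_cat cats0.
  exact: qd_rcons_false.
- have -> : p0 ++ nseq a false ++ nseq b.+1 true =
            rcons (p0 ++ nseq a false ++ nseq b true) true.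
    by rewrite -cats1 -!catA -nseqS_cat cats0.
  apply: qd_rcons_true => //; apply: IH; lia.
Qed.

Lemma split_first (w : seq bool) : w = nseq (size w) true \/
  exists k v, w = nseq k true ++ false :: v.
Proof.
elim: w => [|c w IH]; first by left.
case: c; case: IH => [E|[k [v E]]].
- by left; rewrite /= -E.
- by right; exists k.+1, v; rewrite E.
- by right; exists 0, w.
- by right; exists 0, w.
Qed.

Lemma split_last (w : seq bool) : w = nseq (size w) true \/
  exists p0 a b, [/\ 0 < a, last true p0 = true & w = p0 ++ nseq a false ++ nseq b true].
Proof.
elim: w => [|c w IH]; first by left.
case: IH => [E|[p0 [a [b [a0 l E]]]]].
- case: c; first by left; rewrite /= -E.
  by right; exists [::], 1, (size w); split => //; rewrite {1}E.
- right; case: p0 l E => [|d p0] l E.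
  + case: c.
    * by exists [:: true], a, b; split => //; rewrite E.
    * by exists [::], a.+1, b; split => //; rewrite E.
  + by exists [:: c, d & p0], a, b; split => //; rewrite E.
Qed.

Lemma size_psi q x : size (psi q x) = size x + q + 1.
Proof.
case: (split_last x) => [E|[p0 [a [b [a0 l E]]]]].
- by rewrite E psi_ones !size_nseq.
- rewrite E psi_block // !size_cat !size_nseq; lia.
Qed.

Lemma size_phi q : forall w, size (phi q w) = size w.
Proof.
move=> w; elim: (size w) {-2}w (leqnn (size w)) => [|n IH] {}w hw.
  by case: w hw.
case: (split_first w) => [E|[k [v E]]].
  by rewrite E phi_nseq.
have hv : size v <= n by move: hw; rewrite E size_cat /= size_nseq; lia.
rewrite E phi_cons; case: eqP => [->|_].
- by rewrite size_psi IH // size_cat /= size_nseq; lia.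
- by rewrite !size_cat /= IH // size_nseq; lia.
Qed.

Lemma qd_psi q x : 0 < q -> qd q x -> qd q (psi q x).
Proof.
move=> q0 H; case: (split_last x) => [E|[p0 [a [b [a0 l E]]]]].
  by rewrite E psi_ones; apply: qd_ones.
have hb : b < q * a by apply: (qd_last _ a0 l); rewrite -E.
rewrite E psi_block //; apply: qd_block => //.
- by apply: (@qd_prefix _ _ (nseq a false ++ nseq b true)); rewrite -E.
- rewrite mulnS; lia.
Qed.

Lemma qd_snoc_block q p k : 0 < q -> qd q p -> k < q -> qd q (p ++ false :: nseq k true).
Proof.
move=> q0 H hk; case: (split_last p) => [E|[p0 [a [b [a0 l E]]]]].
  rewrite E; apply: (@qd_block q _ 1 k) => //; first by rewrite last_nseq_true.
  - exact: qd_ones.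
  - by rewrite muln1.
case: b E => [|b] E.
- have -> : p ++ false :: nseq k true = p0 ++ nseq a.+1 false ++ nseq k true.
    by rewrite E cats0 -catA nseqS_cat.
  apply: qd_block => //.
  + by apply: (@qd_prefix _ _ (nseq a false ++ nseq 0 true)); rewrite -E.
  + rewrite mulnS; lia.
- apply: (@qd_block q _ 1 k) => //.
  + by rewrite E catA last_cat_ones.
  + by rewrite muln1.
Qed.

Lemma tail_inj (s s' : seq bool) j j' :
  s ++ false :: nseq j true = s' ++ false :: nseq j' true -> j = j' /\ s = s'.
Proof.
rewrite -(cat1s false (nseq j true)) -(cat1s false (nseq j' true)).
move=> /(congr1 rev); rewrite !rev_cat !rev_nseq -!catA /= => E.
have h : head (~~ true) (false :: rev s) != true by [].
have h' : head (~~ true) (false :: rev s') != true by [].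
have [-> [E2]] := nseq_cat_inj h h' E.
by split => //; rewrite -(revK s) E2 revK.
Qed.

Lemma avoids_nseq q m : avoids_ones q (nseq m true) = (m <= q).
Proof.
rewrite /avoids_ones; case: leqP => hm.
- apply/negP => /infixP [s [s' E]].
  have := congr1 size E; rewrite !size_cat !size_nseq; lia.
- have -> : m = q.+1 + (m - q.+1) by lia.
  by rewrite nseqD prefix_infix.
Qed.

Lemma avoids_cons q k v : avoids_ones q (nseq k true ++ false :: v) =
  (k <= q) && avoids_ones q v.
Proof.
rewrite /avoids_ones; apply/idP/idP.
- move=> H; apply/andP; split.
  + rewrite leqNgt; apply/negP => hk; move/negP: H; apply.
    have -> : k = q.+1 + (k - q.+1) by lia.
    by rewrite nseqD -catA prefix_infix.
  + apply/negP => hv; move/negP: H; apply.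
    apply: (infix_trans hv).
    by rewrite -cat1s catA suffix_infix.
- case/andP => hk hv; apply/negP => /infixP [s [s' E]].
  case: (leqP (size s) k) => hs.
  + have := congr1 (fun t => nth false t k) E.
    rewrite (@nth_cat bool) size_nseq ltnn subnn /= (@nth_cat bool) ltnNge hs /=.
    rewrite -[true :: _]/(nseq q.+1 true ++ s') (@nth_cat bool) size_nseq nth_nseq !ifT //; lia.
  + move/negP: hv; apply; apply/infixP.
    exists (drop k.+1 s), s'.
    have Es : s = take k.+1 s ++ drop k.+1 s by rewrite cat_take_drop.
    have := congr1 (drop k.+1) E; rewrite drop_ones => ->.
    by rewrite {1}Es -catA drop_size_cat // size_takel.
Qed.

Lemma forward q : 0 < q -> forall w, avoids_ones q w -> qd q (phi q w).
Proof.
move=> q0 w; elim: (size w) {-2}w (leqnn (size w)) => [|n IH] {}w hw.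
  by case: w hw => // _ _; rewrite (_ : [::] = nseq 0 true) // phi_nseq; apply: qd_ones.
case: (split_first w) => [E|[k [v E]]].
  by rewrite E phi_nseq => _; apply: qd_ones.
have hv : size v <= n by move: hw; rewrite E size_cat /= size_nseq; lia.
rewrite E avoids_cons phi_cons => /andP [hk av].
case: eqP => [_|nk].
- by apply: qd_psi => //; apply: IH.
- by apply: qd_snoc_block => //; [apply: IH | lia].
Qed.

Lemma classify q w : avoids_ones q w ->
  (w = nseq (size w) true /\ size w <= q) \/
  (exists v, w = nseq q true ++ false :: v /\ phi q w = psi q (phi q v)) \/
  (exists k v, [/\ k < q, w = nseq k true ++ false :: v &
                   phi q w = phi q v ++ false :: nseq k true]).
Proof.
case: (split_first w) => [E|[k [v E]]].
  by rewrite {1}E avoids_nseq => h; left.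
rewrite E avoids_cons phi_cons => /andP [hk _]; right.
case: eqP => [->|nk]; first by left; exists v.
by right; exists k, v; split => //; lia.
Qed.

Lemma psi_inj q x1 x2 : size x1 = size x2 -> psi q x1 = psi q x2 -> x1 = x2.
Proof.
case: (split_last x1) => [E1|[p1 [a1 [b1 [a1p l1 E1]]]]];
case: (split_last x2) => [E2|[p2 [a2 [b2 [a2p l2 E2]]]]].
- by move=> hs _; rewrite E1 E2 hs.
- rewrite E1 E2 psi_ones psi_block // => _ E.
  have : false \in nseq (size x1 + q + 1) true by rewrite E !mem_cat mem_nseq eqxx orbT.
  by rewrite mem_nseq andbF.
- rewrite E1 E2 psi_ones psi_block // => _ E.
  have : false \in nseq (size x2 + q + 1) true by rewrite -E !mem_cat mem_nseq eqxx orbT.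
  by rewrite mem_nseq andbF.
- rewrite E1 E2 !psi_block // => _ E.
  have [-> ea eb] := block_uniq (ltn0Sn _) (ltn0Sn _) l1 l2 E.
  have eb2 : b1 = b2 by lia. have ea2 : a1 = a2 by lia. by rewrite eb2 ea2.
Qed.

Lemma avoids_tail q k v : avoids_ones q (nseq k true ++ false :: v) -> avoids_ones q v.
Proof. by rewrite avoids_cons => /andP []. Qed.

Lemma injective_phi q : 0 < q -> forall n w1 w2, size w1 = n -> size w2 = n ->
  avoids_ones q w1 -> avoids_ones q w2 -> phi q w1 = phi q w2 -> w1 = w2.
Proof.
move=> q0 n; elim: n {-2}n (leqnn n) => [|N IH] n hn w1 w2 s1 s2 av1 av2 E.
  have n0 : n = 0 by lia.
  by move: s1 s2; rewrite n0 => /size0nil -> /size0nil ->.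
case: (classify av1) => [[E1 h1]|[[v1 [E1 P1]]|[k1 [v1 [k1q E1 P1]]]]];
case: (classify av2) => [[E2 h2]|[[v2 [E2 P2]]|[k2 [v2 [k2q E2 P2]]]]].
- by rewrite E1 E2 s1 s2.
- by move: s2 h1; rewrite E2 s1 size_cat size_nseq /=; lia.
- move: E; rewrite E1 phi_nseq P2 => E.
  have : false \in nseq (size w1) true by rewrite E mem_cat inE eqxx orbT.
  by rewrite mem_nseq andbF.
- by move: s1 h2; rewrite E1 s2 size_cat size_nseq /=; lia.
- have sv1 : size v1 = n - q.+1 by move: s1; rewrite E1 size_cat size_nseq /=; lia.
  have sv2 : size v2 = n - q.+1 by move: s2; rewrite E2 size_cat size_nseq /=; lia.
  move: E; rewrite P1 P2 => /psi_inj; rewrite !size_phi sv1 sv2 => /(_ erefl) hv.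
  rewrite E1 E2 (IH (n - q.+1) _ v1 v2) //; first lia.
  + by apply: (@avoids_tail q q); rewrite -E1.
  + by apply: (@avoids_tail q q); rewrite -E2.
- exfalso; move: E; rewrite P1 P2.
  case: (split_last (phi q v1)) => [->|[p0 [a [b [a0 l ->]]]]].
  + rewrite psi_ones => E.
    have : false \in nseq (size (phi q v1) + q + 1) true by rewrite E mem_cat inE eqxx orbT.
    by rewrite mem_nseq andbF.
  + rewrite psi_block // nseqS_cat catA => /tail_inj [hb _]; lia.
- move: E; rewrite E2 phi_nseq P1 => E.
  have : false \in nseq (size w2) true by rewrite -E mem_cat inE eqxx orbT.
  by rewrite mem_nseq andbF.
- exfalso; move: E; rewrite P1 P2.
  case: (split_last (phi q v2)) => [->|[p0 [a [b [a0 l ->]]]]].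
  + rewrite psi_ones => E.
    have : false \in nseq (size (phi q v2) + q + 1) true by rewrite -E mem_cat inE eqxx orbT.
    by rewrite mem_nseq andbF.
  + rewrite psi_block // nseqS_cat catA => /tail_inj [hb _]; lia.
- move: E; rewrite P1 P2 => /tail_inj [ek hv]; subst k2.
  have sv1 : size v1 = n - k1.+1 by move: s1; rewrite E1 size_cat size_nseq /=; lia.
  have sv2 : size v2 = n - k1.+1 by move: s2; rewrite E2 size_cat size_nseq /=; lia.
  rewrite E1 E2 (IH (n - k1.+1) _ v1 v2) //; first lia.
  + by apply: (@avoids_tail q k1); rewrite -E1.
  + by apply: (@avoids_tail q k1); rewrite -E2.
Qed.

Lemma surjective_phi q : 0 < q -> forall n w', size w' = n -> qd q w' ->
  exists w, [/\ size w = n, avoids_ones q w & phi q w = w'].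
Proof.
move=> q0 n; have [N hn] : exists N, n <= N by exists n.
elim: N n hn => [|N IH] n hn w' sw H.
  have n0 : n = 0 by lia.
  move: sw H; rewrite n0 => /size0nil -> _; exists [::]; split => //.
case: (split_last w') => [E|[p0 [a [b [a0 l E]]]]].
- case: (leqP n q) => hnq.
    exists w'; rewrite E phi_nseq avoids_nseq size_nseq sw; split => //.
  have [v [sv av pv]] := IH (n - q.+1) ltac:(lia) (nseq (n - q.+1) true)
      (size_nseq _ _) (@qd_ones q _).
  exists (nseq q true ++ false :: v); split.
  + by rewrite size_cat size_nseq /= sv; lia.
  + by rewrite avoids_cons leqnn.
  + rewrite phi_cons eqxx pv psi_ones E sw; congr nseq; lia.
- have hb : b < q * a by apply: (qd_last _ a0 l); rewrite -E.
  have qp0 : qd q p0 by apply: (@qd_prefix _ _ (nseq a false ++ nseq b true)); rewrite -E.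
  case: a a0 hb E => // a _ hb E.
  case: (ltnP b q) => hbq.
  + have E' : w' = (p0 ++ nseq a false) ++ false :: nseq b true.
      by rewrite E nseqS_cat catA.
    have qx : qd q (p0 ++ nseq a false).
      by apply: (@qd_prefix _ _ (false :: nseq b true)); rewrite -E'.
    have [v [sv av pv]] := IH (size (p0 ++ nseq a false)) ltac:(move: sw hn; rewrite E'
        size_cat /=; lia) _ erefl qx.
    exists (nseq b true ++ false :: v); split.
    * by rewrite -sw E' !size_cat /= size_nseq sv size_cat; lia.
    * by rewrite avoids_cons ltnW.
    * by rewrite phi_cons ifN ?pv ?E' //; apply/eqP; lia.
  + have a0 : 0 < a by case: (posnP a) => // a0; move: hb; rewrite a0 muln1; lia.
    set x := p0 ++ nseq a false ++ nseq (b - q) true.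
    have qx : qd q x.
      apply: qd_block => //; move: hb; rewrite mulnS; lia.
    have [v [sv av pv]] := IH (size x) ltac:(move: sw; rewrite E /x
        !size_cat /= !size_nseq; lia) _ erefl qx.
    exists (nseq q true ++ false :: v); split.
    * by rewrite -sw E /x !size_cat /= !size_nseq sv !size_cat !size_nseq; lia.
    * by rewrite avoids_cons leqnn.
    * rewrite phi_cons eqxx pv /x psi_block // E; congr (_ ++ _ ++ nseq _ _); lia.
Qed.

Theorem theorem1 (q n : nat) : 1 <= q ->
  (forall w : seq bool, size w = n -> avoids_ones q w ->
     size (phi q w) = n /\ q_decreasing q (phi q w)) /\
  (forall w1 w2 : seq bool, size w1 = n -> avoids_ones q w1 ->
     size w2 = n -> avoids_ones q w2 -> phi q w1 = phi q w2 -> w1 = w2) /\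
  (forall w' : seq bool, size w' = n -> q_decreasing q w' ->
     exists w : seq bool, [/\ size w = n, avoids_ones q w & phi q w = w']).
Proof.
move=> q0; split; [|split].
- move=> w sw av; split; first by rewrite size_phi.
  by apply/qd_equiv => //; apply: forward.
- move=> w1 w2 s1 a1 s2 a2; exact: injective_phi s1 s2 a1 a2.
- move=> w' sw /(qd_equiv _ q0) H; exact: surjective_phi sw H.
Qed.
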